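(* Let $F_1=e^{i(\alpha+\beta)}+e^{i\gamma}$, $F_2=-e^{i\beta}+e^{i(\alpha+\gamma)}$, $F_3=-e^{i\alpha}+e^{i(\beta+\gamma)}$, $F_4=-1+e^{i(\alpha+\beta+\gamma)}$, and $f_k=|F_k(\alpha,\beta,\gamma)|^2$ for $1\le k\le4$. Then each $f_k$ is extremal in the class $Q(1,1,1)$.
   Context: $\sigma(1,1,1)$ is the set of trigonometric polynomials $f(\alpha,\beta,\gamma)=\sum_{|k|,|\ell|,|m|\le1}q(k,\ell,m)e^{i(k\alpha+\ell\beta+m\gamma)}$ with $f\ge0$ for all real $\alpha,\beta,\gamma$; $Q(1,1,1)$ is the set of $f\in\sigma(1,1,1)$ of the form $f=\sum_{j=1}^r|F_j|^2$ with $F_j=\sum_{k,\ell,m\in\{0,1\}}q_j(k,\ell,m)e^{i(k\alpha+\ell\beta+m\gamma)}$. An element $f$ of a convex cone $U$ is called extremal in $U$ if whenever $f=g+h$ with $g,h\in U$, both $g$ and $h$ are nonnegative multiples of $f$. *)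

(* Defs.v *)
From Stdlib Require Import Reals List.
From Coquelicot Require Import Coquelicot.
Open Scope R_scope.

Definition expi (t : R) : C := (cos t, sin t).

(* Trigonometric polynomial F = sum_{k,l,m in {0,1}} q(k,l,m) e^{i(k a + l b + m c)} *)
Definition Fpoly (q : nat -> nat -> nat -> C) (a b c : R) : C :=
  fold_right Cplus (RtoC 0)
    (flat_map (fun k => flat_map (fun l => map (fun m =>
       Cmult (q k l m) (expi (INR k * a + INR l * b + INR m * c)))
       (0 :: 1 :: nil)%nat) (0 :: 1 :: nil)%nat) (0 :: 1 :: nil)%nat).

Definition Q111 (f : R -> R -> R -> R) : Prop :=
  exists qs : list (nat -> nat -> nat -> C),
    forall a b c : R,
      f a b c = fold_right (fun q acc => (Cmod (Fpoly q a b c)) ^ 2 + acc) 0 qs.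

Definition extremal (U : (R -> R -> R -> R) -> Prop) (f : R -> R -> R -> R) : Prop :=
  U f /\
  forall g h : R -> R -> R -> R, U g -> U h ->
    (forall a b c, f a b c = g a b c + h a b c) ->
    (exists s, 0 <= s /\ forall a b c, g a b c = s * f a b c) /\
    (exists t, 0 <= t /\ forall a b c, h a b c = t * f a b c).

Definition f1 (a b c : R) : R := (Cmod (Cplus (expi (a + b)) (expi c))) ^ 2.
Definition f2 (a b c : R) : R := (Cmod (Cplus (Copp (expi b)) (expi (a + c)))) ^ 2.
Definition f3 (a b c : R) : R := (Cmod (Cplus (Copp (expi a)) (expi (b + c)))) ^ 2.
Definition f4 (a b c : R) : R := (Cmod (Cplus (Copp (RtoC 1)) (expi (a + b + c)))) ^ 2.

(* Main.v *)
Require Import Defs.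
From Stdlib Require Import Reals List Lra.
From Coquelicot Require Import Coquelicot.
Open Scope R_scope.
Lemma expi_add x y : expi (x + y) = (expi x * expi y)%C.
Proof. unfold expi, Cmult; simpl. rewrite cos_plus, sin_plus. f_equal; ring. Qed.
Lemma expi_lin k l m a b c : expi (k*a + l*b + m*c) = (expi (k*a) * expi (l*b) * expi (m*c))%C.
Proof. rewrite !expi_add. reflexivity. Qed.
Lemma expi_0m a : expi (0*a) = RtoC 1.
Proof. unfold expi, RtoC. rewrite Rmult_0_l, cos_0, sin_0. reflexivity. Qed.
Lemma expi_1m a : expi (1*a) = expi a.
Proof. rewrite Rmult_1_l. reflexivity. Qed.
Definition Pc (c000 c100 c010 c001 c110 c101 c011 c111 : C) (x y z : C) : C :=
  (c000 + c100 * x + c010 * y + c001 * z + c110 * (x*y)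
   + c101 * (x*z) + c011 * (y*z) + c111 * (x*y*z))%C.
Definition pts : list C := (RtoC 1 :: (0,1) :: RtoC (-1) :: nil).
Ltac crunch H := unfold Pc, Cplus, Cmult, Copp, Cconj, RtoC in H; simpl in H;
  let H1 := fresh in let H2 := fresh in injection H as H1 H2.
Ltac inst H := 
  pose proof (H _ _ (or_introl eq_refl) (or_introl eq_refl)) as E1;
  pose proof (H _ _ (or_introl eq_refl) (or_intror (or_introl eq_refl))) as E2;
  pose proof (H _ _ (or_introl eq_refl) (or_intror (or_intror (or_introl eq_refl)))) as E3;
  pose proof (H _ _ (or_intror (or_introl eq_refl)) (or_introl eq_refl)) as E4;
  pose proof (H _ _ (or_intror (or_introl eq_refl)) (or_intror (or_introl eq_refl))) as E5;
  pose proof (H _ _ (or_intror (or_introl eq_refl)) (or_intror (or_intror (or_introl eq_refl)))) as E6;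
  pose proof (H _ _ (or_intror (or_intror (or_introl eq_refl))) (or_introl eq_refl)) as E7;
  pose proof (H _ _ (or_intror (or_intror (or_introl eq_refl))) (or_intror (or_introl eq_refl))) as E8;
  pose proof (H _ _ (or_intror (or_intror (or_introl eq_refl))) (or_intror (or_intror (or_introl eq_refl)))) as E9;
  clear H; crunch E1; crunch E2; crunch E3; crunch E4; crunch E5; crunch E6; crunch E7; crunch E8; crunch E9.
Ltac fin := repeat split; try (unfold RtoC, Copp; simpl; f_equal; lra).

Lemma alg1 a0 b0 a1 b1 a2 b2 a3 b3 a4 b4 a5 b5 a6 b6 a7 b7 :
  (forall x y, In x pts -> In y pts ->
     Pc (a0,b0) (a1,b1) (a2,b2) (a3,b3) (a4,b4) (a5,b5) (a6,b6) (a7,b7) x y (Copp (x*y)) = RtoC 0) ->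
  (a0,b0) = RtoC 0 /\ (a1,b1) = RtoC 0 /\ (a2,b2) = RtoC 0 /\ (a4,b4) = (a3,b3) /\ (a5,b5) = RtoC 0 /\ (a6,b6) = RtoC 0 /\ (a7,b7) = RtoC 0.
Proof. intros H. unfold pts in H. inst H. fin. Qed.
Lemma alg2 a0 b0 a1 b1 a2 b2 a3 b3 a4 b4 a5 b5 a6 b6 a7 b7 :
  (forall x z, In x pts -> In z pts ->
     Pc (a0,b0) (a1,b1) (a2,b2) (a3,b3) (a4,b4) (a5,b5) (a6,b6) (a7,b7) x (x*z) z = RtoC 0) ->
  (a0,b0) = RtoC 0 /\ (a1,b1) = RtoC 0 /\ (a2,b2) = Copp (a5,b5) /\ (a3,b3) = RtoC 0 /\ (a4,b4) = RtoC 0 /\ (a6,b6) = RtoC 0 /\ (a7,b7) = RtoC 0.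
Proof. intros H. unfold pts in H. inst H. fin. Qed.
Lemma alg3 a0 b0 a1 b1 a2 b2 a3 b3 a4 b4 a5 b5 a6 b6 a7 b7 :
  (forall y z, In y pts -> In z pts ->
     Pc (a0,b0) (a1,b1) (a2,b2) (a3,b3) (a4,b4) (a5,b5) (a6,b6) (a7,b7) (y*z) y z = RtoC 0) ->
  (a0,b0) = RtoC 0 /\ (a1,b1) = Copp (a6,b6) /\ (a2,b2) = RtoC 0 /\ (a3,b3) = RtoC 0 /\ (a4,b4) = RtoC 0 /\ (a5,b5) = RtoC 0 /\ (a7,b7) = RtoC 0.
Proof. intros H. unfold pts in H. inst H. fin. Qed.
Lemma alg4 a0 b0 a1 b1 a2 b2 a3 b3 a4 b4 a5 b5 a6 b6 a7 b7 :
  (forall x y, In x pts -> In y pts ->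
     Pc (a0,b0) (a1,b1) (a2,b2) (a3,b3) (a4,b4) (a5,b5) (a6,b6) (a7,b7) x y (Cconj x * Cconj y) = RtoC 0) ->
  (a0,b0) = Copp (a7,b7) /\ (a1,b1) = RtoC 0 /\ (a2,b2) = RtoC 0 /\ (a3,b3) = RtoC 0 /\ (a4,b4) = RtoC 0 /\ (a5,b5) = RtoC 0 /\ (a6,b6) = RtoC 0.
Proof. intros H. unfold pts in H. inst H. fin. Qed.

Definition P (q : nat -> nat -> nat -> C) (x y z : C) : C :=
  Pc (q 0%nat 0%nat 0%nat) (q 1%nat 0%nat 0%nat) (q 0%nat 1%nat 0%nat) (q 0%nat 0%nat 1%nat) (q 1%nat 1%nat 0%nat) (q 1%nat 0%nat 1%nat) (q 0%nat 1%nat 1%nat) (q 1%nat 1%nat 1%nat) x y z.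
Lemma Fpoly_P q a b c : Fpoly q a b c = P q (expi a) (expi b) (expi c).
Proof. unfold Fpoly; simpl. rewrite !expi_lin, !expi_0m, !expi_1m. unfold P, Pc. ring. Qed.
Definition SS (qs : list (nat -> nat -> nat -> C)) a b c :=
  fold_right (fun q acc => (Cmod (Fpoly q a b c)) ^ 2 + acc) 0 qs.
Lemma SS_nonneg qs a b c : 0 <= SS qs a b c.
Proof. induction qs; simpl; [lra|]. pose proof (pow2_ge_0 (Cmod (Fpoly a0 a b c))). unfold SS in *. lra. Qed.
Lemma SS_term qs q a b c : In q qs -> Cmod (Fpoly q a b c) ^ 2 <= SS qs a b c.
Proof. induction qs; simpl; [tauto|]. intros [->|H].
 - pose proof (SS_nonneg qs a b c). unfold SS in *. lra.
 - pose proof (pow2_ge_0 (Cmod (Fpoly a0 a b c))). specialize (IHqs H). unfold SS in *. lra. Qed.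
Lemma half f L g :
 (forall a b c, f a b c = Cmod (L a b c)^2) ->
 (forall q, (forall a b c, f a b c = 0 -> Fpoly q a b c = 0) -> exists lam, forall a b c, Fpoly q a b c = (lam * L a b c)%C) ->
 Q111 g -> (forall a b c, g a b c <= f a b c) ->
 exists s, 0 <= s /\ forall a b c, g a b c = s * f a b c.
Proof.
 intros HL Hq [qs Hg] Hle.
 assert (Hv : forall q, In q qs -> forall a b c, f a b c = 0 -> Fpoly q a b c = 0).
 { intros q Hin a b c H0. apply Cmod_eq_0. pose proof (SS_term qs q a b c Hin).
   specialize (Hle a b c). rewrite Hg in Hle. fold (SS qs a b c) in Hle.
   pose proof (pow2_ge_0 (Cmod (Fpoly q a b c))).
   destruct (Req_dec (Cmod (Fpoly q a b c)) 0) as [E|E]; auto.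
   apply (pow_nonzero _ 2) in E. lra. }
 assert (forall l, (forall q, In q l -> forall a b c, f a b c = 0 -> Fpoly q a b c = 0) ->
   exists s, 0 <= s /\ forall a b c, SS l a b c = s * f a b c).
 { clear Hv Hg Hle. intros l; induction l as [|q qs' IH]; intros H.
   - exists 0. split; [lra|]. intros; unfold SS; cbn [fold_right]. ring.
   - destruct IH as [s [Hs Hs']]. { intros; apply H; simpl; auto. }
     destruct (Hq q) as [lam Hlam]. { apply H; simpl; auto. }
     exists (Cmod lam ^2 + s). split. { pose proof (pow2_ge_0 (Cmod lam)). lra. }
     intros a b c. unfold SS; cbn [fold_right]. fold (SS qs' a b c). rewrite Hs', Hlam, Cmod_mult, HL. ring. }
 destruct (H qs Hv) as [s [Hs Hs']]. exists s. split; [exact Hs|]. intros a b c. rewrite Hg. fold (SS qs a b c). exact (Hs' a b c).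
Qed.
Lemma extremal_of f L :
 (forall a b c, f a b c = Cmod (L a b c)^2) -> Q111 f ->
 (forall q, (forall a b c, f a b c = 0 -> Fpoly q a b c = 0) -> exists lam, forall a b c, Fpoly q a b c = (lam * L a b c)%C) ->
 extremal Q111 f.
Proof.
 intros HL Hf Hq. split; auto. intros g h Hg Hh Hsum. split; [apply (half f L g) | apply (half f L h)]; try assumption; intros a b c; rewrite Hsum.
 - destruct Hh as [qs Hh]. rewrite Hh. fold (SS qs a b c). pose proof (SS_nonneg qs a b c). lra.
 - destruct Hg as [qs Hg]. rewrite Hg. fold (SS qs a b c). pose proof (SS_nonneg qs a b c). lra.
Qed.

Lemma expi_0 : expi 0 = RtoC 1.
Proof. unfold expi, RtoC. rewrite cos_0, sin_0. reflexivity. Qed.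
Lemma expi_PI2 : expi (PI/2) = (0,1).
Proof. unfold expi. rewrite cos_PI2, sin_PI2. reflexivity. Qed.
Lemma expi_PI : expi PI = RtoC (-1).
Proof. unfold expi, RtoC. rewrite cos_PI, sin_PI. reflexivity. Qed.
Lemma expi_opp t : expi (- t) = Cconj (expi t).
Proof. unfold expi, Cconj. simpl. rewrite cos_neg, sin_neg. reflexivity. Qed.
Lemma pts_expi x : In x pts -> exists t, x = expi t.
Proof. unfold pts; simpl. intros [<-|[<-|[<-|[]]]].
 - exists 0. now rewrite expi_0.
 - exists (PI/2). now rewrite expi_PI2.
 - exists PI. now rewrite expi_PI. Qed.

Lemma alg1' c0 c1 c2 c3 c4 c5 c6 c7 :
  (forall x y, In x pts -> In y pts -> Pc c0 c1 c2 c3 c4 c5 c6 c7 x y (Copp (x*y)) = RtoC 0) ->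
  c0 = RtoC 0 /\ c1 = RtoC 0 /\ c2 = RtoC 0 /\ c4 = c3 /\ c5 = RtoC 0 /\ c6 = RtoC 0 /\ c7 = RtoC 0.
Proof. destruct c0, c1, c2, c3, c4, c5, c6, c7. apply alg1. Qed.
Lemma alg2' c0 c1 c2 c3 c4 c5 c6 c7 :
  (forall x z, In x pts -> In z pts -> Pc c0 c1 c2 c3 c4 c5 c6 c7 x (x*z) z = RtoC 0) ->
  c0 = RtoC 0 /\ c1 = RtoC 0 /\ c2 = Copp c5 /\ c3 = RtoC 0 /\ c4 = RtoC 0 /\ c6 = RtoC 0 /\ c7 = RtoC 0.
Proof. destruct c0, c1, c2, c3, c4, c5, c6, c7. apply alg2. Qed.
Lemma alg3' c0 c1 c2 c3 c4 c5 c6 c7 :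
  (forall y z, In y pts -> In z pts -> Pc c0 c1 c2 c3 c4 c5 c6 c7 (y*z) y z = RtoC 0) ->
  c0 = RtoC 0 /\ c1 = Copp c6 /\ c2 = RtoC 0 /\ c3 = RtoC 0 /\ c4 = RtoC 0 /\ c5 = RtoC 0 /\ c7 = RtoC 0.
Proof. destruct c0, c1, c2, c3, c4, c5, c6, c7. apply alg3. Qed.
Lemma alg4' c0 c1 c2 c3 c4 c5 c6 c7 :
  (forall x y, In x pts -> In y pts -> Pc c0 c1 c2 c3 c4 c5 c6 c7 x y (Cconj x * Cconj y) = RtoC 0) ->
  c0 = Copp c7 /\ c1 = RtoC 0 /\ c2 = RtoC 0 /\ c3 = RtoC 0 /\ c4 = RtoC 0 /\ c5 = RtoC 0 /\ c6 = RtoC 0.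
Proof. destruct c0, c1, c2, c3, c4, c5, c6, c7. apply alg4. Qed.

Lemma Cmod0sq : Cmod (RtoC 0) ^ 2 = 0.
Proof. rewrite Cmod_0. ring. Qed.

Lemma key1 q : (forall a b c, f1 a b c = 0 -> Fpoly q a b c = 0) ->
  exists lam, forall a b c, Fpoly q a b c = (lam * (expi (a + b) + expi c))%C.
Proof.
  intros Hz.
  assert (H : forall x y, In x pts -> In y pts -> P q x y (Copp (x*y)) = RtoC 0).
  { intros x y Hx Hy. destruct (pts_expi x Hx) as [a ->]. destruct (pts_expi y Hy) as [b ->].
    replace (Copp (expi a * expi b)) with (expi (a + b + PI)).
    - rewrite <- Fpoly_P. apply Hz. unfold f1.
      replace (expi (a + b) + expi (a + b + PI))%C with (RtoC 0). apply Cmod0sq.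
      rewrite (expi_add (a+b) PI), expi_PI. unfold RtoC, Cplus, Cmult; simpl. f_equal; ring.
    - rewrite !expi_add, expi_PI. unfold RtoC, Copp, Cmult; simpl. f_equal; ring. }
  unfold P in H. apply alg1' in H. destruct H as (E0 & E1 & E2 & E4 & E5 & E6 & E7).
  exists (q 0%nat 0%nat 1%nat). intros a b c. rewrite Fpoly_P. unfold P.
  rewrite E0, E1, E2, E4, E5, E6, E7, expi_add. unfold Pc. ring.
Qed.

Lemma key2 q : (forall a b c, f2 a b c = 0 -> Fpoly q a b c = 0) ->
  exists lam, forall a b c, Fpoly q a b c = (lam * (Copp (expi b) + expi (a + c)))%C.
Proof.
  intros Hz.
  assert (H : forall x z, In x pts -> In z pts -> P q x (x*z) z = RtoC 0).
  { intros x z Hx Hy. destruct (pts_expi x Hx) as [a ->]. destruct (pts_expi z Hy) as [c ->].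
    rewrite <- expi_add, <- Fpoly_P. apply Hz. unfold f2.
    replace (Copp (expi (a + c)) + expi (a + c))%C with (RtoC 0). apply Cmod0sq.
    ring. }
  unfold P in H. apply alg2' in H. destruct H as (E0 & E1 & E2 & E4 & E5 & E6 & E7).
  exists (q 1%nat 0%nat 1%nat). intros a b c. rewrite Fpoly_P. unfold P.
  rewrite E0, E1, E2, E4, E5, E6, E7, expi_add. unfold Pc. ring.
Qed.

Lemma key3 q : (forall a b c, f3 a b c = 0 -> Fpoly q a b c = 0) ->
  exists lam, forall a b c, Fpoly q a b c = (lam * (Copp (expi a) + expi (b + c)))%C.
Proof.
  intros Hz.
  assert (H : forall y z, In y pts -> In z pts -> P q (y*z) y z = RtoC 0).
  { intros y z Hx Hy. destruct (pts_expi y Hx) as [b ->]. destruct (pts_expi z Hy) as [c ->].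
    rewrite <- expi_add, <- Fpoly_P. apply Hz. unfold f3.
    replace (Copp (expi (b + c)) + expi (b + c))%C with (RtoC 0). apply Cmod0sq.
    ring. }
  unfold P in H. apply alg3' in H. destruct H as (E0 & E1 & E2 & E4 & E5 & E6 & E7).
  exists (q 0%nat 1%nat 1%nat). intros a b c. rewrite Fpoly_P. unfold P.
  rewrite E0, E1, E2, E4, E5, E6, E7, expi_add. unfold Pc. ring.
Qed.

Lemma key4 q : (forall a b c, f4 a b c = 0 -> Fpoly q a b c = 0) ->
  exists lam, forall a b c, Fpoly q a b c = (lam * (Copp (RtoC 1) + expi (a + b + c)))%C.
Proof.
  intros Hz.
  assert (H : forall x y, In x pts -> In y pts -> P q x y (Cconj x * Cconj y) = RtoC 0).
  { intros x y Hx Hy. destruct (pts_expi x Hx) as [a ->]. destruct (pts_expi y Hy) as [b ->].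
    replace (Cconj (expi a) * Cconj (expi b))%C with (expi (- (a + b))).
    - rewrite <- Fpoly_P. apply Hz. unfold f4.
      replace (a + b + - (a + b)) with 0 by ring. rewrite expi_0.
      replace (Copp (RtoC 1) + RtoC 1)%C with (RtoC 0). apply Cmod0sq. ring.
    - rewrite expi_opp, expi_add. destruct (expi a), (expi b). unfold Cconj, Cmult; simpl. f_equal; ring. }
  unfold P in H. apply alg4' in H. destruct H as (E0 & E1 & E2 & E4 & E5 & E6 & E7).
  exists (q 1%nat 1%nat 1%nat). intros a b c. rewrite Fpoly_P. unfold P.
  rewrite E0, E1, E2, E4, E5, E6, E7, !expi_add. unfold Pc. ring.
Qed.

Definition w1 (k l m : nat) : C := match k, l, m with 1,1,0 => RtoC 1 | 0,0,1 => RtoC 1 | _,_,_ => RtoC 0 end%nat.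
Definition w2 (k l m : nat) : C := match k, l, m with 0,1,0 => RtoC (-1) | 1,0,1 => RtoC 1 | _,_,_ => RtoC 0 end%nat.
Definition w3 (k l m : nat) : C := match k, l, m with 1,0,0 => RtoC (-1) | 0,1,1 => RtoC 1 | _,_,_ => RtoC 0 end%nat.
Definition w4 (k l m : nat) : C := match k, l, m with 0,0,0 => RtoC (-1) | 1,1,1 => RtoC 1 | _,_,_ => RtoC 0 end%nat.

Ltac wit w := exists (w :: nil); intros a b c; unfold f1, f2, f3, f4; cbn [fold_right]; rewrite Rplus_0_r;
  rewrite Fpoly_P; unfold P, w; cbv beta iota; apply (f_equal (fun z => Cmod z ^ 2));
  rewrite ?expi_add; unfold Pc; ring.

Lemma Q1 : Q111 f1. Proof. wit w1. Qed.
Lemma Q2 : Q111 f2. Proof. wit w2. Qed.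
Lemma Q3 : Q111 f3. Proof. wit w3. Qed.
Lemma Q4 : Q111 f4. Proof. wit w4. Qed.

Theorem proposition3 :
  extremal Q111 f1 /\ extremal Q111 f2 /\ extremal Q111 f3 /\ extremal Q111 f4.
Proof.
  split; [|split; [|split]].
  - apply (extremal_of f1 (fun a b c => expi (a + b) + expi c)%C); [reflexivity | exact Q1 | exact key1].
  - apply (extremal_of f2 (fun a b c => Copp (expi b) + expi (a + c))%C); [reflexivity | exact Q2 | exact key2].
  - apply (extremal_of f3 (fun a b c => Copp (expi a) + expi (b + c))%C); [reflexivity | exact Q3 | exact key3].
  - apply (extremal_of f4 (fun a b c => Copp (RtoC 1) + expi (a + b + c))%C); [reflexivity | exact Q4 | exact key4].
Qed.
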